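(* Let $G$ be an abelian group and $\{a_i\}_{i\ge0}$ an infinite sequence of elements of $G$. If $\{a_i-a_0\mid i\ge1\}$ is linearly independent in $G$, then there exists $N\ge0$ such that $\{a_i\mid i>N\}$ is linearly independent in $G$.
   Context: A family $\{x_i\}$ of elements of an abelian group is linearly independent if $\sum_i c_ix_i=0$ with $c_i\in\mathbb{Z}$, only finitely many nonzero, implies all $c_i=0$. *)

(* Defs.v *)
From mathcomp Require Import all_boot all_order all_algebra.
Set Implicit Arguments. Unset Strict Implicit. Unset Printing Implicit Defensive.
Import GRing.Theory.
Local Open Scope ring_scope.

Definition lin_indep (G : zmodType) (P : pred nat) (x : nat -> G) : Prop :=
  forall (s : seq nat) (c : nat -> int),
    uniq s -> all P s ->
    \sum_(i <- s) x i *~ c i = 0 ->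
    forall i, i \in s -> c i = 0.

(* Main.v *)
Require Import Defs.
From mathcomp Require Import all_boot all_order all_algebra.
From Stdlib Require Import Classical.
Import GRing.Theory.
Local Open Scope ring_scope.

Lemma decomp (G : zmodType) (a : nat -> G) (s : seq nat) (c : nat -> int) :
  \sum_(i <- s) a i *~ c i =
  \sum_(i <- s) (a i - a 0%N) *~ c i + a 0%N *~ (\sum_(i <- s) c i).
Proof.
rewrite mulrz_sumr -big_split /=; apply: eq_bigr => i _.
by rewrite -mulrzDl subrK.
Qed.

Theorem lemmaA4 (G : zmodType) (a : nat -> G) :
  lin_indep (fun i => (1 <= i)%N) (fun i => a i - a 0%N) ->
  exists N : nat, lin_indep (fun i => (N < i)%N) a.
Proof.
move=> H.
set b := fun i => a i - a 0%N.
case: (classic (exists (C0 : int) (s0 : seq nat) (d : nat -> int),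
   [/\ C0 != 0, uniq s0, all (fun i => 1 <= i)%N s0 &
       a 0%N *~ C0 = \sum_(i <- s0) b i *~ d i])).
- case=> C0 [s0 [d [C0n u0 a0 e0]]].
  exists (\max_(i <- s0) i)%N; move=> s c us alls hs i iS.
  rewrite decomp in hs.
  set C := \sum_(i <- s) c i in hs.
  pose e j := if j \in s then c j * C0 else d j * C.
  have nin : forall j, j \in s -> j \notin s0.
    move=> j js; apply/negP => j0.
    have := @leq_bigmax_seq _ s0 predT (fun i => i) j j0 erefl.
    by move/allP: alls => /(_ j js) /= => lt /(leq_trans lt); rewrite ltnn.
  have He : \sum_(j <- s0 ++ s) b j *~ e j = 0.
    rewrite big_cat /=.
    rewrite (eq_big_seq (fun j => b j *~ d j *~ C)); last first.
      move=> j j0; rewrite /e; case: ifP => js; last by rewrite mulrzA.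
      by move: (nin j js); rewrite j0.
    rewrite [X in _ + X](eq_big_seq (fun j => b j *~ c j *~ C0)); last first.
      by move=> j js; rewrite /e js mulrzA.
    rewrite -!mulrz_suml -e0 -mulrzA mulrC mulrzA -mulrzDl addrC.
    by move: hs; rewrite /C => ->; rewrite mul0rz.
  have Hi : e i = 0.
    apply: (H (s0 ++ s) e _ _ He).
    + rewrite cat_uniq u0 us andbT /=; apply/hasPn => j js; exact: nin.
    + rewrite all_cat a0 /=; apply/allP => j js; move/allP: alls => /(_ j js).
      by case: j {js}.
    + by rewrite mem_cat iS orbT.
  move: Hi; rewrite /e iS => /eqP; rewrite mulf_eq0 (negbTE C0n) orbF.
  by move/eqP.
- move=> NE; exists 0%N; move=> s c us alls hs.
  rewrite decomp in hs.
  have C0 : \sum_(i <- s) c i = 0.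
    apply/eqP; apply/negPn/negP => Cn; apply: NE.
    exists (\sum_(i <- s) c i), s, (fun i => - c i); split => //.
    rewrite (eq_bigr (fun i => - (b i *~ c i))); last by move=> i _; rewrite -mulrNz.
    rewrite sumrN; apply/eqP; rewrite -subr_eq0 opprK addrC; apply/eqP.
    exact: hs.
  apply: (H s c us alls); by rewrite -[RHS]hs C0 mulr0z addr0.
Qed.
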